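(* Let $\mathcal{V}$ be a subspace of $\mathbb{R}^n$ and let $V$ be a $k\times n$ real matrix whose row space is $\mathcal{V}$. If there is a centered ellipsoid in $\mathbb{R}^k$ passing through all columns of $V$, then for every $k'\times n$ real matrix $\tilde V$ whose row space is $\mathcal{V}$ there is a centered ellipsoid in $\mathbb{R}^{k'}$ passing through all columns of $\tilde V$.
   Context: A centered ellipsoid in $\mathbb{R}^k$ is described by a symmetric positive semidefinite $k\times k$ matrix $M$; it passes through (i.e. has on its boundary) a point $v\in\mathbb{R}^k$ if $v^TMv=1$. *)

(* Defs.v *)
From HB Require Import structures.
From mathcomp Require Import all_boot all_order all_algebra.
Set Implicit Arguments. Unset Strict Implicit. Unset Printing Implicit Defensive.
Import Order.TTheory GRing.Theory Num.Theory.
Local Open Scope ring_scope.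

Definition psd (R : realFieldType) (k : nat) (M : 'M[R]_k) : Prop :=
  M^T = M /\ forall v : 'cV[R]_k, 0 <= (v^T *m M *m v) 0 0.

Definition ellipsoid_through (R : realFieldType) (k : nat) (M : 'M[R]_k)
  (v : 'cV[R]_k) : Prop := (v^T *m M *m v) 0 0 = 1.

Definition has_ellipsoid_through_cols (R : realFieldType) (k n : nat)
  (V : 'M[R]_(k, n)) : Prop :=
  exists M : 'M[R]_k, psd M /\ forall j : 'I_n, ellipsoid_through M (col j V).

(* Main.v *)
Require Import Defs.
From mathcomp Require Import all_boot all_order all_algebra.
From mathcomp Require Import reals.
Local Open Scope ring_scope.
Import GRing.Theory.

Theorem lemma2p4 (R : realType) (n k : nat) (V : 'M[R]_(k, n)) :
  has_ellipsoid_through_cols V ->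
  forall (k' : nat) (Vt : 'M[R]_(k', n)),
    (Vt == V)%MS -> has_ellipsoid_through_cols Vt.
Proof.
move=> [M [[MT Mpos] HM]] k' Vt /andP[_ /submxP[Y HY]].
exists (Y^T *m M *m Y); split; first split.
- by rewrite !trmx_mul trmxK MT mulmxA.
- move=> v; have := Mpos (Y *m v).
  suff -> : (Y *m v)^T *m M *m (Y *m v) = v^T *m (Y^T *m M *m Y) *m v by [].
  by rewrite trmx_mul !mulmxA.
- move=> j; have := HM j.
  rewrite /ellipsoid_through HY !colE.
  set w := Vt *m delta_mx j 0.
  suff -> : (Y *m Vt *m delta_mx j 0)^T *m M *m (Y *m Vt *m delta_mx j 0)
     = w^T *m (Y^T *m M *m Y) *m w by [].
  by rewrite /w -!(mulmxA Y) trmx_mul !mulmxA.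
Qed.
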